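(* Fix $n,d$ and $J\subseteq[n]$ with $|J|=\ell$ such that $\ell\le d<n-\ell$. Then there is a bijection \[ \{C\in\mathcal{P}(n,d):\mathrm{st}(C)=J\}\longleftrightarrow\{C'\in\mathcal{P}(n,d+1):\mathrm{st}(C')=J\}. \]
   Context: $\mathcal{P}(n,d)$ is the set of words $C=C_1\cdots C_n$ in letters $\mathbf{e}$ (east step) and $\mathbf{n}$ (north step) with exactly $d$ letters $\mathbf{e}$. Scan positions left to right and mark position $i$ with $C_i=\mathbf{e}$ if the number of $j<i$ with $C_j=\mathbf{n}$ equals the number of $j<i$ with $C_j=\mathbf{e}$ that are unmarked; $\mathrm{st}(C)$ is the set of unmarked positions $i$ with $C_i=\mathbf{e}$. *)

(* Defs.v *)
From mathcomp Require Import all_boot.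
Set Implicit Arguments. Unset Strict Implicit. Unset Printing Implicit Defensive.

(* A word C = C_1 ... C_n in letters e (east) / n (north) is encoded as an
   n.-tuple bool with [true] = e and [false] = n.  Positions are 0-based:
   position i in 'I_n corresponds to the paper's position i+1 in [n]. *)

(* Left-to-right scan.  [i] = current (0-based) position, [nN] = number of
   north steps seen so far, [nU] = number of unmarked east steps seen so far.
   An east step at position i is marked iff nN == nU; the unmarked east
   positions are returned. *)
Fixpoint st_aux (w : seq bool) (i nN nU : nat) : seq nat :=
  match w with
  | [::] => [::]
  | b :: w' =>
      if b then
        (if nN == nU then st_aux w' i.+1 nN nU
         else i :: st_aux w' i.+1 nN nU.+1)
      else st_aux w' i.+1 nN.+1 nU
  end.

Definition st (n : nat) (C : n.-tuple bool) : {set 'I_n} :=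
  [set i : 'I_n | nat_of_ord i \in st_aux C 0 0 0].

Definition inP (n d : nat) (C : n.-tuple bool) : bool := count id C == d.

(* Main.v *)
Require Import Defs.
From mathcomp Require Import all_boot.
From mathcomp Require Import zify.
Set Implicit Arguments. Unset Strict Implicit. Unset Printing Implicit Defensive.

Fixpoint sta (w : seq bool) (i g : nat) : seq nat :=
  match w with
  | [::] => [::]
  | b :: w' => if b then (if g == 0 then sta w' i.+1 0 else i :: sta w' i.+1 g.-1)
               else sta w' i.+1 g.+1
  end.
Fixpoint gapf (w : seq bool) (g : nat) : nat :=
  match w with [::] => g | b :: w' => if b then gapf w' g.-1 else gapf w' g.+1 end.
Fixpoint nomark (w : seq bool) (g : nat) : bool :=
  match w with [::] => true
  | b :: w' => if b then (g != 0) && nomark w' g.-1 else nomark w' g.+1 end.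

Lemma st_aux_sta w i nN nU : nU <= nN -> st_aux w i nN nU = sta w i (nN - nU).
Proof.
elim: w i nN nU => [|b w IH] i nN nU H //=.
case: b.
- have -> : (nN == nU) = (nN - nU == 0) by apply/idP/idP => /eqP ?; apply/eqP; lia.
  case: ifP => E; first by rewrite IH // (eqP E).
  rewrite IH; last by move/eqP: E; lia.
  by congr (_ :: sta _ _ _); lia.
- by rewrite IH ?subSn //; lia.
Qed.

Lemma gapf_cat u v g : gapf (u ++ v) g = gapf v (gapf u g).
Proof. by elim: u g => [|b u IH] g //=; case: b. Qed.
Lemma nomark_cat u v g : nomark (u ++ v) g = nomark u g && nomark v (gapf u g).
Proof. by elim: u g => [|b u IH] g //=; case: b; rewrite IH ?andbA. Qed.
Lemma sta_cat u v i g : sta (u ++ v) i g = sta u i g ++ sta v (i + size u) (gapf u g).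
Proof.
elim: u i g => [|b u IH] i g /=; first by rewrite addn0.
by case: b => /=; [case: g => [|g] /=|]; rewrite IH ?addSnnS.
Qed.

Lemma L1gap v g : nomark v g -> gapf v g.+1 = (gapf v g).+1.
Proof.
elim: v g => [|b v IH] g //=; case: b => /=; last exact: IH.
case/andP => Hg Hv; case: g Hg Hv => //= g _ Hv; exact: IH.
Qed.
Lemma L1sta v i g : nomark v g -> sta v i g.+1 = sta v i g.
Proof.
elim: v i g => [|b v IH] i g //=; case: b => /=; last exact: IH.
case/andP => Hg Hv; rewrite (negbTE Hg); case: g Hg Hv IH => //= g _ Hv IH.
by rewrite IH.
Qed.

Lemma gap_acc w i g : gapf w g + size (sta w i g) = g + count (predC id) w.
Proof.
elim: w i g => [|b w IH] i g /=; first by rewrite addn0.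
case: b => /=.
- case: g => [|g] /=; first by move: (IH i.+1 0); lia.
  move: (IH i.+1 g); lia.
- move: (IH i.+1 g.+1); lia.
Qed.

Lemma nomark_count w i g : nomark w g -> count id w = size (sta w i g).
Proof.
elim: w i g => [|b w IH] i g //=; case: b => /=.
- case/andP => Hg Hv; rewrite (negbTE Hg) /= (IH i.+1 _ Hv) add1n.
  done.
- move=> H; exact: IH.
Qed.

Lemma sta_sub w i g : subseq (sta w i g) (iota i (size w)).
Proof.
elim: w i g => [|b w IH] i g //=; case: b.
- case: ifP => _ /=; last by rewrite eqxx.
  apply: subseq_trans (IH _ _) (subseq_cons _ _).
- apply: subseq_trans (IH _ _) (subseq_cons _ _).
Qed.

Definition valid (b : bool) (w : seq bool) (t : nat) : bool :=
  [&& t < size w, nth false w t == b, gapf (take t w) 0 == 0 & nomark (drop t.+1 w) 0].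
Definition pos b w := find (valid b w) (iota 0 (size w)).
Definition flip b w := set_nth false w (pos b w) (~~ b).

Lemma valid_cat b b' u v :
  valid b (u ++ b' :: v) (size u) = [&& b' == b, gapf u 0 == 0 & nomark v 0].
Proof.
rewrite /valid size_cat /= nth_cat ltnn subnn /= take_cat ltnn subnn cats0.
rewrite drop_cat (ltnNge (size u).+1) leqnSn /= subSnn /= drop0.
by rewrite addnS ltnS leq_addr.
Qed.

Lemma valid_dec b w t : valid b w t ->
  exists u v, [/\ w = u ++ b :: v, size u = t, gapf u 0 = 0 & nomark v 0].
Proof.
case/and4P => Ht /eqP Hn /eqP Hg Hv.
exists (take t w), (drop t.+1 w); split => //.
- by rewrite -{1}(cat_take_drop t w) (drop_nth false Ht) Hn.
- by rewrite size_take Ht.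
Qed.

Lemma set_nth_cat (u v : seq bool) b c : set_nth false (u ++ b :: v) (size u) c = u ++ c :: v.
Proof. by elim: u => [|a u IH] //=; rewrite IH. Qed.

Lemma contra_lem b u x y : gapf u 0 = 0 -> gapf (u ++ b :: x) 0 = 0 ->
  nomark (x ++ b :: y) 0 -> False.
Proof.
move=> Hu; rewrite gapf_cat Hu nomark_cat /=.
case: b => /= H /andP [Hx Hr].
- by move: Hr; rewrite H.
- by move: H; rewrite L1gap.
Qed.

Lemma valid_uniq b w t1 t2 : valid b w t1 -> valid b w t2 -> t1 = t2.
Proof.
wlog: t1 t2 / t1 <= t2.
  move=> W H1 H2; case: (leqP t1 t2) => H; first exact: W.
  by apply/esym/W => //; exact: ltnW.
rewrite leq_eqVlt => /orP [/eqP //|Hlt] H1 H2.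
case: (valid_dec H1) => u [v [Ew Su Gu Nv]].
case/and4P: H2 => Ht2 /eqP Hn2 /eqP Hg2 _.
exfalso.
have Hx : t2 - t1.+1 < size v.
  move: Ht2; rewrite Ew size_cat /= -Su; lia.
apply: (contra_lem (b:=b) (x := take (t2 - t1.+1) v) (y := drop (t2 - t1.+1).+1 v) Gu).
- move: Hg2; rewrite Ew.
  have E2 : t2 = size u + (t2 - t1.+1).+1 by rewrite Su; lia.
  by rewrite {1}E2 takeD take_size_cat // drop_size_cat //.
- move: Nv; rewrite -{1}(cat_take_drop (t2 - t1.+1) v) (drop_nth false Hx).
  suff -> : nth false v (t2 - t1.+1) = b by [].
  move: Hn2; rewrite Ew nth_cat Su ltnNge (ltnW Hlt) /=.
  by have -> : t2 - t1 = (t2 - t1.+1).+1 by lia.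
Qed.

Lemma pos_valid b w t : valid b w t -> pos b w = t.
Proof.
move=> H.
have Hh : has (valid b w) (iota 0 (size w)).
  apply/hasP; exists t => //; rewrite mem_iota /=; by case/and4P: H.
have Hl := Hh; rewrite has_find size_iota in Hl.
have := nth_find 0 Hh; rewrite nth_iota // add0n => H'.
exact: valid_uniq H' H.
Qed.

Lemma valid_flip b w t : valid b w t -> valid (~~b) (set_nth false w t (~~b)) t.
Proof.
case/valid_dec => u [v [-> <- Gu Nv]].
by rewrite set_nth_cat valid_cat eqxx Gu Nv.
Qed.

Lemma flip_eq b w t : valid b w t -> flip b w = set_nth false w t (~~ b).
Proof. by move=> H; rewrite /flip (pos_valid H). Qed.

Lemma flipK b w t : valid b w t -> flip (~~b) (flip b w) = w.
Proof.
move=> H; rewrite (flip_eq H) (flip_eq (valid_flip H)) negbK.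
case/valid_dec: H => u [v [-> <- _ _]].
by rewrite !set_nth_cat.
Qed.

Lemma flip_size b w t : valid b w t -> size (flip b w) = size w.
Proof. move=> H; rewrite (flip_eq H); case/valid_dec: H => u [v [-> <- _ _]].
by rewrite set_nth_cat !size_cat. Qed.

Lemma flip_count b w t : valid b w t -> count id (flip b w) + b = count id w + ~~ b.
Proof. move=> H; rewrite (flip_eq H); case/valid_dec: H => u [v [-> <- _ _]].
rewrite set_nth_cat !count_cat /=; case: b => /=; lia. Qed.

Lemma flip_sta b w t : valid b w t -> sta (flip b w) 0 0 = sta w 0 0.
Proof. move=> H; rewrite (flip_eq H); case/valid_dec: H => u [v [-> <- Gu Nv]].
rewrite set_nth_cat !sta_cat Gu /=.
by case: b => /=; rewrite ?L1sta.
Qed.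

Lemma exN w : 0 < gapf w 0 -> exists t, valid false w t.
Proof.
suff: 0 < gapf w 0 -> exists u v, [/\ w = u ++ false :: v, gapf u 0 = 0 & nomark v 0].
  move=> H /H [u [v [-> Gu Nv]]]; exists (size u); by rewrite valid_cat Gu Nv.
elim/last_ind: w => [|w b IH] //.
rewrite -cats1 gapf_cat => H.
case: (posnP (gapf w 0)) => [Hw0 | Hwpos].
- move: H; rewrite Hw0; case: b => //= _.
  by exists w, [::]; split.
- case: (IH Hwpos) => u [v [Ew Gu Nv]].
  exists u, (rcons v b); split.
  + by rewrite Ew -cats1 -catA.
  + done.
  + move: H; rewrite -cats1 nomark_cat Nv Ew gapf_cat Gu /= L1gap //.
    by case: b => //=; rewrite andbT => H; rewrite -lt0n.
Qed.

Lemma exE w : ~~ nomark w 0 -> exists t, valid true w t.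
Proof.
suff: ~~ nomark w 0 -> exists u v, [/\ w = u ++ true :: v, gapf u 0 = 0 & nomark v 0].
  move=> H /H [u [v [-> Gu Nv]]]; exists (size u); by rewrite valid_cat Gu Nv.
elim/last_ind: w => [|w b IH] //.
rewrite -cats1 nomark_cat.
case Hb: (nomark [:: b] (gapf w 0)); last first.
  move: Hb => /=; case: b => //=.
  rewrite andbT => /negbFE /eqP H _.
  by exists w, [::]; split.
rewrite andbT => /IH [u [v [Ew Gu Nv]]].
exists u, (rcons v b); split.
+ by rewrite Ew -cats1 -catA.
+ done.
+ move: Hb; rewrite -cats1 nomark_cat Nv Ew gapf_cat Gu /=.
  by case: b.
Qed.

Lemma stE n (C : n.-tuple bool) : st C = [set i : 'I_n | val i \in sta C 0 0].
Proof. by rewrite /st st_aux_sta. Qed.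

Lemma size_sta_le n (C : n.-tuple bool) : size (sta C 0 0) <= #|st C|.
Proof.
rewrite stE.
set s := sta C 0 0.
have Hs : subseq s (iota 0 n) by rewrite -(size_tuple C); exact: sta_sub.
have Hu : uniq s := subseq_uniq Hs (iota_uniq 0 n).
have Hall : count (fun x => x < n) s = size s.
  apply/eqP; rewrite -all_count; apply/allP => x /(mem_subseq Hs).
  by rewrite mem_iota.
rewrite -Hall -(size_pmap_sub 'I_n).
rewrite -(card_uniqP _); last exact: pmap_sub_uniq.
apply: subset_leq_card; apply/subsetP => x.
by rewrite mem_pmap_sub inE.
Qed.

Definition flipT n b (C : n.-tuple bool) : n.-tuple bool := insubd C (flip b C).

Lemma flipT_val n b (C : n.-tuple bool) t : valid b C t -> val (flipT b C) = flip b C.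
Proof. by move=> H; rewrite /flipT insubdK //; apply/eqP; rewrite (flip_size H) size_tuple. Qed.

Theorem lemma4p13 (n d : nat) (J : {set 'I_n}) :
  #|J| <= d -> d < n - #|J| ->
  exists f : {C : n.-tuple bool | inP d C && (st C == J)} ->
             {C : n.-tuple bool | inP d.+1 C && (st C == J)},
    bijective f.
Proof.
move=> H1 H2.
have VD : forall C : {C : n.-tuple bool | inP d C && (st C == J)},
    valid false (val C) (pos false (val C)).
  case=> C /= /andP [/eqP Hc /eqP Hs].
  have [t Ht] : exists t, valid false C t.
    apply: exN.
    have := gap_acc C 0 0; have := size_sta_le C; rewrite Hs.
    have := count_predC id C; rewrite size_tuple Hc. lia.
  by rewrite (pos_valid Ht).
have VC : forall C : {C : n.-tuple bool | inP d.+1 C && (st C == J)},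
    valid true (val C) (pos true (val C)).
  case=> C /= /andP [/eqP Hc /eqP Hs].
  have [t Ht] : exists t, valid true C t.
    apply: exE; apply/negP => /(nomark_count 0) Hn.
    have := size_sta_le C; rewrite Hs -Hn Hc. lia.
  by rewrite (pos_valid Ht).
have PF : forall C : {C : n.-tuple bool | inP d C && (st C == J)},
    inP d.+1 (flipT false (val C)) && (st (flipT false (val C)) == J).
  move=> C; have V := VD C; case: C V => C /= /andP [/eqP Hc /eqP Hs] V.
  apply/andP; split.
  - rewrite /inP (flipT_val V); have := flip_count V; rewrite Hc /=; lia.
  - by rewrite stE (flipT_val V) (flip_sta V) -stE Hs.
have PG : forall C : {C : n.-tuple bool | inP d.+1 C && (st C == J)},
    inP d (flipT true (val C)) && (st (flipT true (val C)) == J).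
  move=> C; have V := VC C; case: C V => C /= /andP [/eqP Hc /eqP Hs] V.
  apply/andP; split.
  - rewrite /inP (flipT_val V); have := flip_count V; rewrite Hc /=; lia.
  - by rewrite stE (flipT_val V) (flip_sta V) -stE Hs.
exists (fun C => exist _ (flipT false (val C)) (PF C)).
exists (fun C => exist _ (flipT true (val C)) (PG C)).
- move=> C; apply: val_inj => /=; apply: val_inj.
  have V := VD C.
  have V2 : valid true (val (flipT false (val C))) (pos false (val C)).
    by rewrite (flipT_val V) (flip_eq V); exact: (valid_flip V).
  rewrite (flipT_val V2) (flipT_val V); exact: (flipK V).
- move=> C; apply: val_inj => /=; apply: val_inj.
  have V := VC C.
  have V2 : valid false (val (flipT true (val C))) (pos true (val C)).
    by rewrite (flipT_val V) (flip_eq V); exact: (valid_flip V).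
  rewrite (flipT_val V2) (flipT_val V); exact: (flipK V).
Qed.
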